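(* Fix $s>2$ and $\mu^*>0$. Then for every $\mu_1>\mu^*$ there exist $\delta>0$ and a relatively open neighborhood $U\subset\mathcal{C}_{[\mu^*,\mu_1]}$ of $(\Delta\times[\mu^*,\mu_1])\cap\mathcal{C}_{[\mu^*,\mu_1]}$ such that $d\theta(f_{s,\mu}(\mathbf{x}))\ge\delta$ for all $(\mathbf{x},\mu)\in U\setminus(\Delta\times[\mu^*,\mu_1])$.
   Context: $f_{s,\mu}$ is the repressilator vector field $\dot x=\frac{\mu}{1+y^s}-x$, $\dot y=\frac{\mu}{1+z^s}-y$, $\dot z=\frac{\mu}{1+x^s}-z$ on $\mathbb{R}^3_+$. For $\mu\ge0$, $K_\mu:=\{(x,y,z)\colon\frac{\mu}{2+\mu^s}\le x,y,z\le\mu\}$; $\mathcal{C}:=\{(\mathbf{x},\mu)\in\mathbb{R}^3\times\mathbb{R}\colon\mu\ge0,\ \mathbf{x}\in K_\mu\}$ and $\mathcal{C}_J:=\mathcal{C}\cap(\mathbb{R}^3\times J)$. $\Delta:=\mathrm{span}\{(1,1,1)\}$; $\|\mathbf{x}_\perp\|^2=\tfrac23(x^2+y^2+z^2-xy-yz-zx)$ is the squared distance to $\Delta$; $d\theta:=\frac{1}{\sqrt3}\frac{(z-y)dx+(x-z)dy+(y-x)dz}{\|\mathbf{x}_\perp\|^2}$ on $\mathbb{R}^3\setminus\Delta$. *)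

(* Defs.v *)
From Stdlib Require Import Reals Lra.
Open Scope R_scope.

(* Hill term mu / (1 + u^s), with real exponent s (u^s := Rpower u s, used only for u > 0). *)
Definition hill (s mu u : R) : R := mu / (1 + Rpower u s).

Definition rep_f1 (s mu x y z : R) : R := hill s mu y - x.
Definition rep_f2 (s mu x y z : R) : R := hill s mu z - y.
Definition rep_f3 (s mu x y z : R) : R := hill s mu x - z.

Definition in_K (s mu x y z : R) : Prop :=
  let lo := mu / (2 + Rpower mu s) in
  lo <= x <= mu /\ lo <= y <= mu /\ lo <= z <= mu.

Definition in_CJ (s a b x y z mu : R) : Prop :=
  0 <= mu /\ in_K s mu x y z /\ a <= mu <= b.

Definition on_diag (x y z : R) : Prop := x = y /\ y = z.

(* squared distance to Delta *)
Definition perp2 (x y z : R) : R :=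
  2 / 3 * (x ^ 2 + y ^ 2 + z ^ 2 - x * y - y * z - z * x).

Definition dtheta (x y z v1 v2 v3 : R) : R :=
  / sqrt 3 * (((z - y) * v1 + (x - z) * v2 + (y - x) * v3) / perp2 x y z).

Definition rel_open (C U : R -> R -> R -> R -> Prop) : Prop :=
  forall x y z mu, U x y z mu ->
    exists eps, 0 < eps /\
      forall x' y' z' mu', C x' y' z' mu' ->
        Rabs (x' - x) < eps -> Rabs (y' - y) < eps -> Rabs (z' - z) < eps ->
        Rabs (mu' - mu) < eps -> U x' y' z' mu'.

(* Main.v *)
Require Import Defs.
From Stdlib Require Import Reals Lra.
Open Scope R_scope.

Lemma rp_pos x t : 0 < Rpower x t.
Proof. unfold Rpower. apply exp_pos. Qed.

Lemma rp_le_base a b t : 0 < a -> a <= b -> 0 <= t -> Rpower a t <= Rpower b t.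
Proof.
  intros Ha Hab Ht. unfold Rpower.
  assert (H : t * ln a <= t * ln b).
  { apply Rmult_le_compat_l; auto.
    destruct (Rle_lt_or_eq_dec a b Hab) as [H|H].
    - left. apply ln_increasing; auto.
    - subst; right; reflexivity. }
  destruct (Rle_lt_or_eq_dec _ _ H) as [H1|H1].
  - left; apply exp_increasing; auto.
  - rewrite H1; right; reflexivity.
Qed.

Lemma rp_one t : Rpower 1 t = 1.
Proof. unfold Rpower. rewrite ln_1, Rmult_0_r. apply exp_0. Qed.

Lemma divdiff s a b u v : 0 < a -> 1 < s -> a <= u <= b -> a <= v <= b ->
  exists D, Rpower v s - Rpower u s = D * (v - u) /\
    s * Rpower a (s - 1) <= D <= s * Rpower b (s - 1).
Proof.
  intros Ha Hs Hu Hv.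
  assert (Hd : forall c, a <= c <= b -> s * Rpower a (s-1) <= s * Rpower c (s-1) <= s * Rpower b (s-1)).
  { intros c Hc. split; apply Rmult_le_compat_l; try lra; apply rp_le_base; lra. }
  destruct (Rtotal_order u v) as [H|[H|H]].
  - destruct (MVT_cor2 (fun t => Rpower t s) (fun t => s * Rpower t (s-1)) u v H)
      as [c [Hc1 Hc2]].
    { intros c Hc. apply derivable_pt_lim_power. lra. }
    exists (s * Rpower c (s-1)). split; [exact Hc1|]. apply Hd; lra.
  - subst. exists (s * Rpower a (s-1)). split; [ring|]. apply Hd; lra.
  - destruct (MVT_cor2 (fun t => Rpower t s) (fun t => s * Rpower t (s-1)) v u H)
      as [c [Hc1 Hc2]].
    { intros c Hc. apply derivable_pt_lim_power. lra. }
    exists (s * Rpower c (s-1)). split.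
    + simpl in Hc1. lra.
    + apply Hd; lra.
Qed.

Lemma slope s mu a b u v : 0 < a -> 1 < s -> 0 < mu -> a <= u <= b -> a <= v <= b ->
  exists A, hill s mu v - hill s mu u = - (v - u) * A /\
   mu * s * Rpower a (s-1) / (1 + Rpower b s)^2 <= A <=
   mu * s * Rpower b (s-1) / (1 + Rpower a s)^2.
Proof.
  intros Ha Hs Hmu Hu Hv.
  destruct (divdiff s a b u v Ha Hs Hu Hv) as [D [HD1 HD2]].
  set (P := 1 + Rpower u s). set (Q := 1 + Rpower v s).
  assert (HP : 1 + Rpower a s <= P <= 1 + Rpower b s).
  { unfold P; split; apply Rplus_le_compat_l; apply rp_le_base; lra. }
  assert (HQ : 1 + Rpower a s <= Q <= 1 + Rpower b s).
  { unfold Q; split; apply Rplus_le_compat_l; apply rp_le_base; lra. }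
  assert (Hpa : 0 < 1 + Rpower a s) by (generalize (rp_pos a s); lra).
  exists (mu * D / (P * Q)). split.
  - unfold hill. fold P Q.
    assert (HQe : Q = P + D * (v - u)) by (unfold P, Q; lra).
    assert (HP0 : P <> 0) by lra. assert (HQ0 : Q <> 0) by lra.
    rewrite HQe in *. field. split; assumption.
  - assert (HaD : 0 <= s * Rpower a (s-1)) by (generalize (rp_pos a (s-1)); nra).
    split; unfold Rdiv.
    + replace (mu * s * Rpower a (s - 1) * / (1 + Rpower b s) ^ 2)
        with ((mu * (s * Rpower a (s - 1))) * / ((1 + Rpower b s) ^ 2)) by ring.
      apply Rmult_le_compat.
      * nra.
      * left. apply Rinv_0_lt_compat. nra.
      * apply Rmult_le_compat_l; lra.
      * apply Rinv_le_contravar. nra. simpl. nra.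
    + replace (mu * s * Rpower b (s - 1) * / (1 + Rpower a s) ^ 2)
        with ((mu * (s * Rpower b (s - 1))) * / ((1 + Rpower a s) ^ 2)) by ring.
      apply Rmult_le_compat.
      * nra.
      * left. apply Rinv_0_lt_compat. nra.
      * apply Rmult_le_compat_l; lra.
      * apply Rinv_le_contravar. simpl; nra. simpl. nra.
Qed.

Lemma keyalg A B Lo Hi p q : 0 < Lo -> Lo <= A <= Hi -> Lo <= B <= Hi -> Hi <= 2 * Lo ->
  B * (p + q)^2 - A * (p * q) >= Lo / 2 * (p^2 + p*q + q^2).
Proof.
  intros H0 HA HB HH.
  destruct (Rle_or_lt (p*q) 0) as [Hpq|Hpq].
  - assert (B * (p+q)^2 >= Lo * (p+q)^2) by (apply Rle_ge, Rmult_le_compat_r; [apply pow2_ge_0|lra]).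
    assert (- A * (p*q) >= - Lo * (p*q)) by nra.
    assert (HQ : 0 <= p^2 + p*q + q^2) by nra.
    assert (Lo * (p+q)^2 - Lo * (p*q) = Lo * (p^2+p*q+q^2)) by ring.
    assert (0 <= Lo * (p^2+p*q+q^2)) by (apply Rmult_le_pos; lra).
    assert (Lo / 2 * (p^2+p*q+q^2) = / 2 * (Lo * (p^2+p*q+q^2))) by (field).
    lra.
  - assert (E1 : (p+q)^2 - 4*(p*q) = (p-q)^2) by ring.
    assert (4 * (p*q) <= (p+q)^2) by (generalize (pow2_ge_0 (p-q)); lra).
    assert (A * (p*q) <= Hi * (p*q)) by (apply Rmult_le_compat_r; lra).
    assert (Hi * (4 * (p*q)) <= Hi * (p+q)^2) by (apply Rmult_le_compat_l; lra).
    assert (Hi * (p*q) <= Hi / 4 * (p+q)^2) by lra.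
    assert (B * (p + q)^2 >= Lo * (p+q)^2) by (apply Rle_ge, Rmult_le_compat_r; [apply pow2_ge_0|lra]).
    assert (HQ : p^2 + p*q + q^2 <= (p+q)^2) by (assert ((p+q)^2 - (p^2+p*q+q^2) = p*q) by ring; lra).
    assert (Lo / 2 * (p^2+p*q+q^2) <= Lo/2 * (p+q)^2) by (apply Rmult_le_compat_l; lra).
    assert (Hi / 4 * (p+q)^2 <= Lo/2 * (p+q)^2) by (apply Rmult_le_compat_r; [apply pow2_ge_0|lra]).
    lra.
Qed.

Lemma abs_bnd u e : Rabs u < e -> u < e /\ - e < u.
Proof. intros H. apply Rabs_def2 in H. lra. Qed.

Lemma abs_le u : u <= Rabs u /\ - u <= Rabs u.
Proof. split. apply Rle_abs. rewrite <- Rabs_Ropp. apply Rle_abs. Qed.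

Theorem lemma8 (s mustar : R) (hs : 2 < s) (hmu : 0 < mustar) :
  forall mu1 : R, mustar < mu1 ->
  exists delta : R, 0 < delta /\
  exists U : R -> R -> R -> R -> Prop,
    (forall x y z mu, U x y z mu -> in_CJ s mustar mu1 x y z mu) /\
    rel_open (in_CJ s mustar mu1) U /\
    (forall x y z mu, on_diag x y z -> in_CJ s mustar mu1 x y z mu -> U x y z mu) /\
    (forall x y z mu, U x y z mu -> ~ on_diag x y z ->
       dtheta x y z (rep_f1 s mu x y z) (rep_f2 s mu x y z) (rep_f3 s mu x y z) >= delta).
Proof.
  intros mu1 Hmu1.
  assert (Hs1 : 1 < s) by lra.
  set (L := mustar / (2 + Rpower mu1 s)).
  assert (HL : 0 < L).
  { unfold L. apply Rdiv_lt_0_compat; auto. generalize (rp_pos mu1 s); lra. }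
  set (r := Rpower (5/4) (/ s)).
  assert (Hr1 : 1 < r).
  { unfold r. rewrite <- (Rpower_O (5/4)) by lra. apply Rpower_lt; try lra.
    apply Rinv_0_lt_compat; lra. }
  assert (Hrs : Rpower r s = 5/4).
  { unfold r. rewrite Rpower_mult. rewrite Rinv_l by lra. apply Rpower_1; lra. }
  assert (Hrs1 : Rpower r (s-1) <= 5/4).
  { rewrite <- Hrs. apply Rle_Rpower; lra. }
  set (eta := L * (r - 1)).
  assert (Heta : 0 < eta) by (unfold eta; nra).
  set (Lo0 := mustar * s * Rpower L (s-1) / (1 + Rpower mu1 s)^2).
  assert (HLo0 : 0 < Lo0).
  { unfold Lo0. apply Rdiv_lt_0_compat.
    - generalize (rp_pos L (s-1)); intros; apply Rmult_lt_0_compat; nra.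
    - generalize (rp_pos mu1 s); intros; nra. }
  assert (Hs3 : 0 < / sqrt 3) by (apply Rinv_0_lt_compat, sqrt_lt_R0; lra).
  exists (/ sqrt 3 * (3/4 * Lo0)). split; [nra|].
  exists (fun x y z mu => in_CJ s mustar mu1 x y z mu /\
     Rabs (x - y) < eta /\ Rabs (y - z) < eta /\ Rabs (z - x) < eta).
  split; [|split; [|split]].
  - intros x y z mu H; apply H.
  - intros x y z mu [HC [H1 [H2 H3]]].
    set (e := Rmin (Rmin ((eta - Rabs (x-y))/2) ((eta - Rabs (y-z))/2)) ((eta - Rabs (z-x))/2)).
    assert (He1 : e <= (eta - Rabs (x-y))/2) by (unfold e; eapply Rle_trans; [apply Rmin_l|apply Rmin_l]).
    assert (He2 : e <= (eta - Rabs (y-z))/2) by (unfold e; eapply Rle_trans; [apply Rmin_l|apply Rmin_r]).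
    assert (He3 : e <= (eta - Rabs (z-x))/2) by (unfold e; apply Rmin_r).
    exists e. split.
    + unfold e. apply Rmin_glb_lt; [apply Rmin_glb_lt|]; lra.
    + intros x' y' z' mu' HC' Hx Hy Hz Hm. split; [exact HC'|].
      apply abs_bnd in Hx; apply abs_bnd in Hy; apply abs_bnd in Hz.
      destruct (abs_le (x-y)); destruct (abs_le (y-z)); destruct (abs_le (z-x)).
      split; [|split]; apply Rabs_def1; lra.
  - intros x y z mu [Hxy Hyz] HC. split; [exact HC|].
    subst. rewrite Rminus_diag, Rabs_R0. lra.
  - intros x y z mu [HC [H1 [H2 H3]]] Hnd.
    destruct HC as [Hmu0 [HK Hmm]].
    destruct HK as [Kx [Ky Kz]]. cbv zeta in Kx, Ky, Kz.
    assert (HmuP : 0 < mu) by lra.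
    assert (Hlo : L <= mu / (2 + Rpower mu s)).
    { unfold L, Rdiv. apply Rmult_le_compat; try lra.
      - left; apply Rinv_0_lt_compat. generalize (rp_pos mu1 s); lra.
      - apply Rinv_le_contravar. generalize (rp_pos mu s); lra.
        apply Rplus_le_compat_l. apply rp_le_base; lra. }
    set (a := Rmin x (Rmin y z)). set (b := Rmax x (Rmax y z)).
    assert (Ha : L <= a) by (unfold a; repeat apply Rmin_glb; lra).
    assert (Hb : b <= mu1) by (unfold b; repeat apply Rmax_lub; lra).
    assert (Hxa : a <= x) by (unfold a; apply Rmin_l).
    assert (Hya : a <= y) by (unfold a; eapply Rle_trans; [apply Rmin_r|apply Rmin_l]).
    assert (Hza : a <= z) by (unfold a; eapply Rle_trans; [apply Rmin_r|apply Rmin_r]).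
    assert (Hxb : x <= b) by (unfold b; apply Rmax_l).
    assert (Hyb : y <= b) by (unfold b; eapply Rle_trans; [|apply Rmax_r]; apply Rmax_l).
    assert (Hzb : z <= b) by (unfold b; eapply Rle_trans; [|apply Rmax_r]; apply Rmax_r).
    apply abs_bnd in H1; apply abs_bnd in H2; apply abs_bnd in H3.
    assert (Hba : b < a + eta).
    { assert (Hax : x - eta < a) by (unfold a; repeat apply Rmin_glb_lt; lra).
      assert (Hay : y - eta < a) by (unfold a; repeat apply Rmin_glb_lt; lra).
      assert (Haz : z - eta < a) by (unfold a; repeat apply Rmin_glb_lt; lra).
      unfold b; repeat apply Rmax_lub_lt; lra. }
    assert (Hbr : b <= r * a) by (unfold eta in Hba; nra).
    assert (Ha0 : 0 < a) by lra.
    destruct (slope s mu a b x y Ha0 Hs1 HmuP ltac:(lra) ltac:(lra)) as [A [HA1 HA2]].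
    destruct (slope s mu a b x z Ha0 Hs1 HmuP ltac:(lra) ltac:(lra)) as [B [HB1 HB2]].
    set (Lo := mu * s * Rpower a (s - 1) / (1 + Rpower b s) ^ 2) in *.
    set (Hi := mu * s * Rpower b (s - 1) / (1 + Rpower a s) ^ 2) in *.
    set (al := Rpower a (s-1)) in *. set (be := Rpower b (s-1)) in *.
    set (ga := Rpower a s) in *. set (ep := Rpower b s) in *.
    assert (Hal : 0 < al) by apply rp_pos.
    assert (Hga : 0 < ga) by apply rp_pos.
    assert (Hbe : be <= 5/4 * al).
    { unfold be, al. eapply Rle_trans. apply rp_le_base; [lra|exact Hbr|lra].
      rewrite <- Rpower_mult_distr by lra. apply Rmult_le_compat_r; [left; apply rp_pos|lra]. }
    assert (Hep : ep <= 5/4 * ga).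
    { unfold ep, ga. eapply Rle_trans. apply rp_le_base; [lra|exact Hbr|lra].
      rewrite <- Rpower_mult_distr by lra. rewrite Hrs. lra. }
    assert (Hep0 : 0 < ep) by apply rp_pos.
    set (X := mu * s * al / (1 + ga)^2).
    assert (HX : 0 < X).
    { unfold X. apply Rdiv_lt_0_compat; [|nra]. apply Rmult_lt_0_compat; nra. }
    assert (HHi : Hi <= 5/4 * X).
    { unfold Hi, X.
      replace (5 / 4 * (mu * s * al / (1 + ga) ^ 2)) with ((mu * s) * (5/4 * al) / (1 + ga) ^ 2) by (field; nra).
      unfold Rdiv at 1 2.
      apply Rmult_le_compat_r; [left; apply Rinv_0_lt_compat; nra|].
      apply Rmult_le_compat_l; nra. }
    assert (HLo : 16/25 * X <= Lo).
    { unfold Lo, X.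
      replace (16/25 * (mu * s * al / (1 + ga) ^ 2)) with ((mu * s * al) / ((5/4 * (1 + ga)) ^ 2)) by (field; lra).
      unfold Rdiv at 1 2.
      assert (0 < mu * s) by (apply Rmult_lt_0_compat; lra).
      apply Rmult_le_compat_l; [left; apply Rmult_lt_0_compat; lra|].
      assert (1 + ep <= 5/4 * (1 + ga)) by lra.
      apply Rinv_le_contravar; [simpl; nra|]. simpl. nra. }
    assert (HLoP : 0 < Lo) by lra.
    assert (HHL : Hi <= 2 * Lo) by lra.
    assert (HLoL0 : Lo0 <= Lo).
    { generalize (rp_pos L (s-1)) (rp_pos mu1 s); intros HL1 Hm1.
      unfold Lo0, Lo, Rdiv. apply Rmult_le_compat.
      - apply Rmult_le_pos; [apply Rmult_le_pos|]; lra.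
      - left; apply Rinv_0_lt_compat. simpl; nra.
      - apply Rmult_le_compat; try lra.
        + apply Rmult_le_pos; lra.
        + apply Rmult_le_compat_r; lra.
        + apply rp_le_base; lra.
      - apply Rinv_le_contravar; [simpl; nra|].
        assert (ep <= Rpower mu1 s) by (apply rp_le_base; lra). simpl; nra. }
    set (p := y - x). set (q := z - y).
    assert (Hkey := keyalg A B Lo Hi p q HLoP ltac:(lra) ltac:(lra) HHL).
    set (Q := p^2 + p*q + q^2) in *.
    assert (HQ : 0 < Q).
    { destruct (Rlt_le_dec 0 Q) as [h|h]; [exact h|exfalso].
      assert (E : 4 * Q = (2*p+q)^2 + 3*q^2) by (unfold Q; ring).
      generalize (pow2_ge_0 (2*p+q)) (pow2_ge_0 q); intros G1 G2.
      assert (Hq2 : q^2 = 0) by lra. assert (Hp2 : (2*p+q)^2 = 0) by lra.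
      assert (Hq : q = 0) by (clear - Hq2; nra).
      assert (Hp : p = 0) by (clear - Hp2 Hq; subst; nra).
      apply Hnd. unfold on_diag, p, q in *. lra. }
    unfold dtheta, rep_f1, rep_f2, rep_f3.
    assert (Hnum : (z - y) * (hill s mu y - x) + (x - z) * (hill s mu z - y) + (y - x) * (hill s mu x - z)
                   = B * (p + q)^2 - A * (p * q)).
    { replace (hill s mu y) with (hill s mu x - (y - x) * A) by lra.
      replace (hill s mu z) with (hill s mu x - (z - x) * B) by lra.
      unfold p, q. ring. }
    assert (Hper : perp2 x y z = 2/3 * Q) by (unfold perp2, Q, p, q; ring).
    rewrite Hnum, Hper.
    assert (Hdiv : (B * (p + q) ^ 2 - A * (p * q)) / (2 / 3 * Q) - 3/4 * Lo
                   = (B * (p + q) ^ 2 - A * (p * q) - Lo/2 * Q) / (2/3 * Q)) by (field; lra).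
    assert (0 <= (B * (p + q) ^ 2 - A * (p * q) - Lo/2 * Q) / (2/3 * Q)).
    { unfold Rdiv. apply Rmult_le_pos; [lra|]. left; apply Rinv_0_lt_compat; lra. }
    apply Rle_ge. apply Rmult_le_compat_l; lra.
Qed.
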